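(* Consider the problem $\min f(x)$ subject to $x\in\mathcal{F}\cap\mathcal{Z}\cap X$, where $\mathcal{F}=\{x:g(x)\le0\}$, and the penalized problem $\min\{P(x;\varepsilon): x\in X\cap\mathcal{Z}\}$ with $P(x;\varepsilon)=f(x)+\frac1\varepsilon\sum_{i=1}^m\max\{0,g_i(x)\}$. Suppose EMFCQ (see context) holds. Then for any $\varepsilon>0$, every Clarke stationary point $\bar x$ of the penalized problem with $\bar x\in\mathcal{F}\cap\mathcal{Z}\cap X$ is a KKT stationary point of the constrained problem.
   Context: $\{1,\dots,n\}=I^c\cup I^z$, $I^c\cap I^z=\emptyset$; $v_c=(v_i)_{i\in I^c}$, $v_z=(v_i)_{i\in I^z}$. $l,u\in\mathbb{R}^n$ finite, $l_i<u_i$, $l_i,u_i\in\mathbb{Z}$ for $i\in I^z$; $X=\{x:l\le x\le u\}$, $\mathcal{Z}=\{x: x_i\in\mathbb{Z}\ \forall i\in I^z\}$. $f$ and $g=(g_1,\dots,g_m)$ are Lipschitz continuous w.r.t. the continuous variables: $|h(x)-h(y)|\le L\|x-y\|$ for $h\in\{f,g_1,\dots,g_m\}$ whenever $x_z=y_z$. A vector in $\mathbb{Z}^p$ is primitive if the gcd of its components is 1. For $x\in X\cap\mathcal{Z}$: $D^z(x)=\{d\in\mathbb{Z}^n: d_i=0\ (i\in I^c),\ d_z\text{ primitive},\ x+d\in X\cap\mathcal{Z}\}$, $\mathcal{B}^z(x)=\{x+d: d\in D^z(x)\}$, $D^c(x)=\{s: s_i=0\ (i\in I^z),\ s_i\ge0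 \text{ if } i\in I^c,x_i=l_i,\ s_i\le0\text{ if } i\in I^c,x_i=u_i\}$. For $h$ Lipschitz w.r.t. continuous variables and $s$ with $s_z=0$: $h^{Cl}_{x_c}(x;s)=\limsup_{y_c\to x_c,\,y_z=x_z,\,t\downarrow0}\frac{h(y+ts)-h(y)}{t}$, $\partial_c h(x)=\{v: v_z=0,\ h^{Cl}_{x_c}(x;s)\ge s^\top v\ \forall s \text{ with } s_z=0\}$. Clarke stationary point of the penalized problem: $x\in X\cap\mathcal{Z}$ with $P^{Cl}_{x_c}(x;s)\ge0$ for all $s\in D^c(x)$ and $P(x;\varepsilon)\le P(y;\varepsilon)$ for all $y\in\mathcal{B}^z(x)$. KKT stationary point of the constrained problem: $x^*\in\mathcal{F}\cap\mathcal{Z}\cap X$ for which there is $\lambda\in\mathbb{R}^m$ with $\lambda\ge0$, $\lambda^\top g(x^* )=0$, $\max\{\xi^\top s: \xi\in\partial_c f(x^* )+\sum_{i=1}^m\lambda_i\partial_c g_i(x^* )\}\ge0$ for every $s\in D^c(x^* )$ (Minkowski sum of sets), and $f(x^* )\le f(x)$ for all $x\in\mathcal{B}^z(x^* )\cap\mathcal{F}$. EMFCQ: for every $x\in(X\cap\mathcal{Z})\setminus\operatorname{int}\mathcal{F}$, either (i) there is $s\in D^c(x)$ with $\xi^\top s<0$ for all $\xi\in\partial_c g_i(x)$ and all $i$ with $g_i(x)\ge0$; or (ii) there is $\bar d\in D^z(x)$ with $\sum_{i}\max\{0,g_i(x+\bar d)\}<\sum_{i}\max\{0,g_i(x)\}$.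 *)

(* Defs.v *)
From HB Require Import structures.
From mathcomp Require Import all_boot all_order all_algebra.
From mathcomp Require Import all_classical all_reals ereal.
Set Implicit Arguments. Unset Strict Implicit. Unset Printing Implicit Defensive.
Import Order.TTheory GRing.Theory Num.Theory.
Local Open Scope classical_set_scope.
Local Open Scope ring_scope.

Section MINLP.
Context {R : realType} {n m : nat}.
(* vectors of R^n are functions 'I_n -> R; Ic is the set of continuous
   indices I^c, and its complement ~: Ic is I^z. *)
Local Notation vec := ('I_n -> R).

Definition vadd (x y : vec) : vec := fun i => x i + y i.
Definition vsub (x y : vec) : vec := fun i => x i - y i.
Definition vscale (t : R) (x : vec) : vec := fun i => t * x i.
Definition vdot (x y : vec) : R := \sum_i x i * y i.
Definition vnorm (x : vec) : R := Num.sqrt (\sum_i x i ^+ 2).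
Definition ivec (d : 'I_n -> int) : vec := fun i => (d i)%:~R.

Definition inX (l u : vec) (x : vec) : Prop := forall i, l i <= x i <= u i.
Definition inZ (Ic : {set 'I_n}) (x : vec) : Prop :=
  forall i, i \notin Ic -> x i \is a Num.int.

Definition lipschitz_c (Ic : {set 'I_n}) (L : R) (h : vec -> R) : Prop :=
  forall x y, (forall i, i \notin Ic -> x i = y i) ->
    `|h x - h y| <= L * vnorm (vsub x y).

Definition primitive_z (Ic : {set 'I_n}) (d : 'I_n -> int) : Prop :=
  \big[gcdz/0%R]_(i in ~: Ic) d i = 1.

Definition Dz (Ic : {set 'I_n}) (l u : vec) (x : vec) (d : 'I_n -> int) : Prop :=
  (forall i, i \in Ic -> d i = 0) /\ primitive_z Ic d /\
  inX l u (vadd x (ivec d)) /\ inZ Ic (vadd x (ivec d)).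

Definition Bz (Ic : {set 'I_n}) (l u : vec) (x y : vec) : Prop :=
  exists d, Dz Ic l u x d /\ y = vadd x (ivec d).

Definition Dc (Ic : {set 'I_n}) (l u : vec) (x s : vec) : Prop :=
  (forall i, i \notin Ic -> s i = 0) /\
  (forall i, i \in Ic -> x i = l i -> 0 <= s i) /\
  (forall i, i \in Ic -> x i = u i -> s i <= 0).

(* Clarke directional derivative w.r.t. the continuous variables:
   limsup_{y_c -> x_c, y_z = x_z, t downarrow 0} (h(y+ts)-h(y))/t
   = inf_{del>0} sup {quotient : |y-x| < del, y_z = x_z, 0 < t < del}. *)
Definition clarke_dd (Ic : {set 'I_n}) (h : vec -> R) (x s : vec) : \bar R :=
  ereal_inf [set ereal_sup
     [set ((h (vadd yt.1 (vscale yt.2 s)) - h yt.1) / yt.2)%:E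
        | yt in [set yt : vec * R | vnorm (vsub yt.1 x) < del /\
                  (forall i, i \notin Ic -> yt.1 i = x i) /\
                  0 < yt.2 < del]]
   | del in [set del : R | 0 < del]].

Definition clarke_subdiff (Ic : {set 'I_n}) (h : vec -> R) (x v : vec) : Prop :=
  (forall i, i \notin Ic -> v i = 0) /\
  forall s, (forall i, i \notin Ic -> s i = 0) ->
    ((vdot s v)%:E <= clarke_dd Ic h x s)%E.

Definition viol (g : 'I_m -> vec -> R) (x : vec) : R :=
  \sum_i Num.max 0 (g i x).

Definition penalty (f : vec -> R) (g : 'I_m -> vec -> R) (eps : R) (x : vec) : R :=
  f x + eps^-1 * viol g x.

Definition feasible (g : 'I_m -> vec -> R) (x : vec) : Prop :=
  forall i, g i x <= 0.

Definition in_int_feasible (g : 'I_m -> vec -> R) (x : vec) : Prop :=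
  exists r, 0 < r /\ forall y, vnorm (vsub y x) < r -> feasible g y.

Definition clarke_stationary (Ic : {set 'I_n}) (l u : vec) (P : vec -> R) (x : vec) : Prop :=
  inX l u x /\ inZ Ic x /\
  (forall s, Dc Ic l u x s -> (0%:E <= clarke_dd Ic P x s)%E) /\
  (forall y, Bz Ic l u x y -> P x <= P y).

Definition KKT_stationary (Ic : {set 'I_n}) (l u : vec) (f : vec -> R)
    (g : 'I_m -> vec -> R) (x : vec) : Prop :=
  feasible g x /\ inZ Ic x /\ inX l u x /\
  exists lam : 'I_m -> R,
    (forall i, 0 <= lam i) /\ \sum_i lam i * g i x = 0 /\
    (forall s, Dc Ic l u x s ->
       (* max { xi^T s : xi in partial f(x) + sum_i lam_i partial g_i(x) } >= 0 *)
       exists (xi0 : vec) (xis : 'I_m -> vec),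
         clarke_subdiff Ic f x xi0 /\
         (forall i, clarke_subdiff Ic (g i) x (xis i)) /\
         0 <= vdot (fun j => xi0 j + \sum_i lam i * xis i j) s) /\
    (forall y, Bz Ic l u x y -> feasible g y -> f x <= f y).

Definition EMFCQ (Ic : {set 'I_n}) (l u : vec) (g : 'I_m -> vec -> R) : Prop :=
  forall x, inX l u x -> inZ Ic x -> ~ in_int_feasible g x ->
    (exists s, Dc Ic l u x s /\
       forall i, 0 <= g i x -> forall xi, clarke_subdiff Ic (g i) x xi ->
         vdot xi s < 0) \/
    (exists d, Dz Ic l u x d /\ viol g (vadd x (ivec d)) < viol g x).

End MINLP.

(* Main.v *)
Require Import Defs.
From HB Require Import structures.
From mathcomp Require Import all_boot all_order all_algebra.
From mathcomp Require Import all_classical all_reals ereal.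
From mathcomp Require Import ring lra.
Import Order.TTheory GRing.Theory Num.Theory.
Local Open Scope ring_scope.

Module Helpers.
Local Open Scope classical_set_scope.
Local Open Scope ring_scope.
Set Implicit Arguments. Unset Strict Implicit. Unset Printing Implicit Defensive.

Section HBsec.
Variable R : realType.

Definition sublin (T : finType) (p : (T -> R) -> R) :=
  (forall v w, p (fun i => v i + w i) <= p v + p w) /\
  (forall (t : R) v, 0 < t -> p (fun i => t * v i) = t * p v).

Lemma sublin0 (T : finType) (p : (T -> R) -> R) : sublin p -> p (fun _ => 0) = 0.
Proof.
move=> [_ hom]; have := hom 2 (fun _ => 0) (ltr0Sn R 1).
have -> : (fun _ : T => 2 * (0:R)) = (fun _ => 0) by apply: funext => i; rewrite mulr0.
move=> h; lra.
Qed.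

Lemma cone_inf (T : finType) (p : (T -> R) -> R) (C : set (T -> R))
  (theta : (T -> R) -> R) :
  sublin p -> C (fun _ => 0) ->
  (forall a b, C a -> C b -> C (fun i => a i + b i)) ->
  (forall t a, 0 < t -> C a -> C (fun i => t * a i)) ->
  (forall a b, C a -> C b -> theta (fun i => a i + b i) = theta a + theta b) ->
  (forall t a, 0 < t -> C a -> theta (fun i => t * a i) = t * theta a) ->
  (forall a, C a -> theta a <= p a) ->
  exists q, sublin q /\
    (forall v a, C a -> q v <= p (fun i => v i + a i) - theta a).
Proof.
move=> sp C0 Cadd Cmul thadd thmul thp.
have p0 := sublin0 sp; case: sp => padd phom.
have th0 : theta (fun _ => 0) = 0.
  have := thadd _ _ C0 C0.
  have -> : (fun _ : T => (0:R) + 0) = (fun _ => 0) by apply: funext => i; rewrite addr0.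
  by move=> h; lra.
pose E (v : T -> R) : set R := (fun a : T -> R => p (fun i => v i + a i) - theta a) @` C.
have Ene v : E v !=set0 by exists (p (fun i => v i + 0) - theta (fun _ => 0)), (fun _ => 0).
have Elb v : lbound (E v) (- p (fun i => - v i)).
  move=> _ [a Ca <-].
  suff: theta a <= p (fun i => v i + a i) + p (fun i => - v i) by lra.
  apply: le_trans (thp _ Ca) _.
  have := padd (fun i => v i + a i) (fun i => - v i).
  have -> // : (fun i => (v i + a i) + - v i) = a by apply: funext => i; rewrite addrC addKr.
have Ehas v : has_lbound (E v) by exists (- p (fun i => - v i)).
exists (fun v => inf (E v)); split; last first.
  by move=> v a Ca; apply: ge_inf => //; exists a.
split.
- move=> v w.
  suff : forall a b, C a -> C b -> inf (E (fun i => v i + w i)) <=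
      (p (fun i => v i + a i) - theta a) + (p (fun i => w i + b i) - theta b).
    move=> H; rewrite -lerBlDr; apply: lb_le_inf => // _ [b Cb <-].
    rewrite lerBlDr addrC -lerBlDr; apply: lb_le_inf => // _ [a Ca <-].
    by rewrite lerBlDr addrC; apply: H.
  move=> a b Ca Cb; apply: le_trans.
    apply: ge_inf => //; exists (fun i => a i + b i) => //; exact: Cadd.
  rewrite thadd // opprD addrACA lerD2r.
  have -> : (fun i => v i + w i + (a i + b i)) = (fun i => (v i + a i) + (w i + b i)).
    by apply: funext => i; ring.
  exact: padd.
- move=> t v t0; apply/eqP; rewrite eq_le; apply/andP; split.
  + rewrite -ler_pdivrMl //; apply: lb_le_inf => // _ [a Ca <-].
    rewrite ler_pdivrMl //; apply: le_trans (ge_inf (Ehas _) _) _.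
      by exists (fun i => t * a i); first exact: Cmul.
    rewrite /= thmul // mulrBr -phom //.
    have -> // : (fun i => t * v i + t * a i) = (fun i => t * (v i + a i)).
    by apply: funext => i; ring.
  + apply: lb_le_inf => // _ [a Ca <-].
    have Ca' : C (fun i => t^-1 * a i) by apply: Cmul => //; rewrite invr_gt0.
    have tha : theta a = t * theta (fun i => t^-1 * a i).
      rewrite -thmul //; congr theta; apply: funext => i.
      by rewrite mulrA mulfV ?mul1r // gt_eqF.
    have hp : p (fun i => t * v i + a i) = t * p (fun i => v i + t^-1 * a i).
      rewrite -phom //; congr p; apply: funext => i.
      by rewrite mulrDr mulrA mulfV ?mul1r // gt_eqF.
    rewrite tha hp -mulrBr ler_pM2l //.
    by apply: ge_inf => //; exists (fun i => t^-1 * a i).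
Qed.

Lemma HB_seq (T : finType) (s : seq T) : forall (p : (T -> R) -> R), sublin p ->
  exists c : T -> R, forall v, (forall i, i \notin s -> v i = 0) ->
    \sum_(i | i \in s) c i * v i <= p v.
Proof.
elim: s => [|j s IH] p sp.
  exists (fun _ => 0) => v hv; rewrite big1 ?mul0r //.
  have -> : v = (fun _ => 0) by apply: funext => i; apply: hv; rewrite in_nil.
  by rewrite (sublin0 sp).
case: (boolP (j \in s)) => js.
  have [c Hc] := IH p sp; exists c => v hv.
  rewrite (eq_bigl (fun i => i \in s)); last first.
    by move=> i; rewrite in_cons; case: eqP => // ->.
  apply: Hc => i ins; apply: hv; rewrite in_cons negb_or ins andbT.
  by apply/eqP => eij; move: ins; rewrite eij js.
pose e : T -> R := fun i => (i == j)%:R.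
pose cj := p e.
pose C : set (T -> R) := [set a | exists r, a = (fun i => r * e i)].
pose theta (a : T -> R) := a j * cj.
have p0 := sublin0 sp; have [padd phom] := sp.
have pe : 0 <= p e + p (fun i => - e i).
  by have := padd e (fun i => - e i); under eq_fun do rewrite subrr; rewrite p0.
have [q [sq hq]] : exists q, sublin q /\
    (forall v a, C a -> q v <= p (fun i => v i + a i) - theta a).
  apply: cone_inf => //.
  - by exists 0; apply: funext => i; rewrite mul0r.
  - move=> a b [r ->] [r' ->]; exists (r + r'); apply: funext => i; ring.
  - move=> t a _ [r ->]; exists (t * r); apply: funext => i; ring.
  - by move=> a b _ _; rewrite /theta mulrDl.
  - by move=> t a _ _; rewrite /theta mulrA.
  - move=> a [r ->]; rewrite /theta /e eqxx mulr1.
    case: (ltrgtP 0 r) => hr.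
    + by rewrite phom // /cj.
    + have -> : (fun i => r * (i == j)%:R) = (fun i => (- r) * (- e i)).
        by apply: funext => i; rewrite mulrNN.
      rewrite phom ?oppr_gt0 //. rewrite /cj; nra.
    + by rewrite -hr mul0r; under eq_fun do rewrite mul0r; rewrite p0.
have [c Hc] := IH q sq.
exists (fun i => if i == j then cj else c i) => v hv.
pose v' := fun i => if i == j then 0 else v i.
have hv' : forall i, i \notin s -> v' i = 0.
  move=> i ins; rewrite /v'; case: eqP => // /eqP nij; apply: hv.
  by rewrite in_cons negb_or nij.
have := hq v' (fun i => v j * e i) (ex_intro _ (v j) erefl).
have -> : (fun i => v' i + v j * e i) = v.
  apply: funext => i; rewrite /v' /e; case: eqP => [->|_]; first by rewrite add0r mulr1.
  by rewrite mulr0 addr0.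
rewrite /theta /e eqxx mulr1 => H.
rewrite (bigD1 j) ?mem_head //= eqxx.
rewrite (eq_bigr (fun i => c i * v' i)); last first.
  by move=> i /andP[_ /negbTE nij]; rewrite nij /v' nij.
rewrite (eq_bigl (fun i => i \in s)); last first.
  move=> i; rewrite in_cons; case: eqP => [->|] /=; first by rewrite (negbTE js).
  by rewrite andbT.
have := Hc v' hv'; lra.
Qed.

Lemma HB (T : finType) (p : (T -> R) -> R) : sublin p ->
  exists c : T -> R, forall v, \sum_i c i * v i <= p v.
Proof.
move=> sp; have [c Hc] := HB_seq (enum T) sp; exists c => v.
have : forall i, i \notin enum T -> v i = 0 by move=> i; rewrite mem_enum.
move/(Hc v).
by rewrite (eq_bigl (fun i => true)) // => i; rewrite mem_enum.
Qed.
End HBsec.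

Section Clarke.
Variables (R : realType) (n : nat) (Ic : {set 'I_n}) (x : 'I_n -> R).
Local Notation vec := ('I_n -> R).

Lemma vnorm_ge0 (v : vec) : 0 <= vnorm v.
Proof. exact: sqrtr_ge0. Qed.

Lemma vnorm_scale (t : R) (s : vec) : 0 <= t -> vnorm (vscale t s) = t * vnorm s.
Proof.
move=> t0; rewrite /vnorm /vscale.
under eq_bigr do rewrite exprMn.
by rewrite -mulr_sumr sqrtrM ?sqr_ge0 // sqrtr_sqr ger0_norm.
Qed.

Lemma vnorm0 : vnorm (fun _ : 'I_n => (0:R)) = 0.
Proof. by rewrite /vnorm big1 ?sqrtr0 // => i _; rewrite expr0n. Qed.

Lemma vnorm_add (a b : vec) :
  vnorm (fun i => a i + b i) <= 2 * (vnorm a + vnorm b).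
Proof.
have h1 : \sum_i (a i + b i) ^+ 2 <= (2 * (vnorm a + vnorm b)) ^+ 2.
  have ha : vnorm a ^+ 2 = \sum_i a i ^+ 2 by rewrite sqr_sqrtr // sumr_ge0 // => i _; rewrite sqr_ge0.
  have hb : vnorm b ^+ 2 = \sum_i b i ^+ 2 by rewrite sqr_sqrtr // sumr_ge0 // => i _; rewrite sqr_ge0.
  have h2 : \sum_i (a i + b i) ^+ 2 <= 2 * \sum_i a i ^+ 2 + 2 * \sum_i b i ^+ 2.
    rewrite !mulr_sumr -big_split /=; apply: ler_sum => i _.
    have := sqr_ge0 (a i - b i); nra.
  have := vnorm_ge0 a; have := vnorm_ge0 b; rewrite -ha -hb in h2; nra.
apply: le_trans (ler_wsqrtr h1) _.
rewrite sqrtr_sqr ger0_norm //; have := vnorm_ge0 a; have := vnorm_ge0 b; lra.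
Qed.

Definition zc (s : vec) := forall i, i \notin Ic -> s i = 0.
Definition adm (del : R) (yt : vec * R) := vnorm (vsub yt.1 x) < del /\
  (forall i, i \notin Ic -> yt.1 i = x i) /\ 0 < yt.2 < del.
Definition quot (h : vec -> R) (s : vec) (yt : vec * R) :=
  (h (vadd yt.1 (vscale yt.2 s)) - h yt.1) / yt.2.
Definition Qs h s del := sup (quot h s @` adm del).
Definition hd h s := inf (Qs h s @` [set del : R | 0 < del]).

Section Basic.
Set Default Proof Using "All".
Variables (L : R) (h : vec -> R) (s : vec).
Hypotheses (L0 : 0 <= L) (hL : lipschitz_c Ic L h) (zs : zc s).

Lemma quot_bound del yt : adm del yt -> `|quot h s yt| <= L * vnorm s.
Proof.
case: yt => y t [_ [_ /andP[t0 _]]] /=; rewrite /quot /=.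
have ti : 0 < t^-1 by rewrite invr_gt0.
rewrite normrM (gtr0_norm ti) ler_pdivrMr //.
idtac.
apply: (le_trans (hL (x:=vadd y (vscale t s)) (y:=y) _)).
  by move=> i /zs si; rewrite /vadd /vscale si mulr0 addr0.
have -> : vsub (vadd y (vscale t s)) y = vscale t s.
  by apply: funext => i; rewrite /vsub /vadd addrC addKr.
rewrite vnorm_scale ?(ltW t0) //.
by rewrite [t * _]mulrC mulrA.
Qed.

Lemma adm_ne del : 0 < del -> adm del (x, del / 2).
Proof.
move=> d0; split => /=.
  have -> : vsub x x = (fun _ => 0) by apply: funext => i; rewrite /vsub subrr.
  by rewrite vnorm0.
split => //; apply/andP; split; first by rewrite divr_gt0.
by rewrite ltr_pdivrMr // ltr_pMr // ltr1n.
Qed.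

Let B := L * vnorm s.

Lemma quot_le del yt : adm del yt -> quot h s yt <= B.
Proof. by move/quot_bound/(le_trans (ler_norm _)). Qed.
Lemma quot_ge del yt : adm del yt -> - B <= quot h s yt.
Proof. by move/quot_bound; rewrite ler_norml => /andP[]. Qed.

Lemma Qs_hasub del : has_ubound (quot h s @` adm del).
Proof. by exists B => _ [yt a <-]; apply: quot_le a. Qed.

Lemma Qs_ub del yt : adm del yt -> quot h s yt <= Qs h s del.
Proof. by move=> a; apply: ub_le_sup; [exact: Qs_hasub| exists yt]. Qed.

Lemma Qs_le del b : 0 < del -> (forall yt, adm del yt -> quot h s yt <= b) ->
  Qs h s del <= b.
Proof.
move=> d0 H; apply: ge_sup; first by exists (quot h s (x, del / 2)), (x, del / 2) => //; exact: adm_ne.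
by move=> _ [yt a <-]; apply: H.
Qed.

Lemma Qs_ge del : 0 < del -> - B <= Qs h s del.
Proof.
move=> d0; apply: le_trans (quot_ge (adm_ne d0)) _; exact: Qs_ub (adm_ne d0).
Qed.

Lemma Qs_leB del : 0 < del -> Qs h s del <= B.
Proof. by move=> d0; apply: Qs_le => // yt a; apply: quot_le a. Qed.

Lemma hd_haslb : has_lbound (Qs h s @` [set del : R | 0 < del]).
Proof. by exists (- B) => _ [del d0 <-]; apply: Qs_ge. Qed.

Lemma hd_le del : 0 < del -> hd h s <= Qs h s del.
Proof. by move=> d0; apply: ge_inf; [exact: hd_haslb| exists del]. Qed.

Lemma hd_ge b : (forall del, 0 < del -> b <= Qs h s del) -> b <= hd h s.
Proof.
move=> H; rewrite /hd; apply: lb_le_inf; first by exists (Qs h s 1), 1 => //=.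
by move=> _ [del d0 <-]; apply: H.
Qed.

Lemma hd_bounds : - B <= hd h s <= B.
Proof.
apply/andP; split; first by apply: hd_ge => del; apply: Qs_ge.
exact: le_trans (hd_le ltr01) (Qs_leB ltr01).
Qed.

Lemma hd_approx e : 0 < e -> exists2 del, 0 < del & Qs h s del < hd h s + e.
Proof.
move=> e0; have hi : has_inf (Qs h s @` [set del : R | 0 < del]).
  by split; [exists (Qs h s 1), 1 => //=|exact: hd_haslb].
have [_ [del d0 <-] H] := inf_adherent e0 hi.
by exists del.
Qed.

Lemma Qs_mono d1 d2 : 0 < d1 -> d1 <= d2 -> Qs h s d1 <= Qs h s d2.
Proof.
move=> d10 d12; apply: Qs_le => // -[y t] [a1 [a2 /andP[a3 a4]]].
apply: Qs_ub; split; first exact: lt_le_trans d12.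
by split => //; rewrite a3 /= (lt_le_trans a4 d12).
Qed.

Lemma clarke_eq : clarke_dd Ic h x s = (hd h s)%:E.
Proof.
rewrite /clarke_dd /hd -ereal_inf_EFin; last 2 first.
- exact: hd_haslb.
- by exists (Qs h s 1), 1 => //=.
have adm' del : 0 < del -> quot h s @` adm del !=set0.
  by move=> d0; exists (quot h s (x, del / 2)), (x, del / 2) => //; exact: adm_ne.
congr ereal_inf; apply/seteqP; split => [_ [del d0 <-]|_ [_ [del d0 <-] <-]].
  exists (Qs h s del); first by exists del.
  by rewrite /Qs -ereal_sup_EFin ?image_comp //; [exact: Qs_hasub|exact: adm'].
exists del => //.
by rewrite /Qs -ereal_sup_EFin ?image_comp //; [exact: Qs_hasub|exact: adm'].
Qed.


End Basic.

Section Sublin.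
Variables (L : R) (h : vec -> R).
Hypotheses (L0 : 0 <= L) (hL : lipschitz_c Ic L h).

Lemma zc_scale t s : zc s -> zc (vscale t s).
Proof. by move=> zs i /zs; rewrite /vscale => ->; rewrite mulr0. Qed.
Lemma zc_add s1 s2 : zc s1 -> zc s2 -> zc (vadd s1 s2).
Proof. by move=> z1 z2 i ni; rewrite /vadd z1 // z2 // addr0. Qed.

Lemma hd_scale_le t s : zc s -> 0 < t -> hd h (vscale t s) <= t * hd h s.
Proof.
move=> zs t0; rewrite -ler_pdivrMl //; apply: (hd_ge L0 hL zs) => del d0.
rewrite ler_pdivrMl //.
have t1 : 0 < 1 + t by rewrite addr_gt0.
have d'0 : 0 < del / (1 + t) by rewrite divr_gt0.
apply: le_trans (hd_le L0 hL (zc_scale t zs) d'0) _.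
apply: (Qs_le L0 hL (zc_scale t zs) d'0) => -[y tau] [ay [zy /andP[tau0 taud]]] /=.
have -> : quot h (vscale t s) (y, tau) = t * quot h s (y, tau * t).
  rewrite /quot /=.
  have -> : vscale tau (vscale t s) = vscale (tau * t) s.
    by apply: funext => i; rewrite /vscale mulrA.
  have hta : tau != 0 by rewrite gt_eqF.
  have ht : t != 0 by rewrite gt_eqF.
  field.
  by rewrite ht hta.
rewrite ler_pM2l //; apply: (Qs_ub L0 hL zs); split => /=.
  apply: lt_le_trans ay _; rewrite ler_pdivrMr //; nra.
split => //; rewrite mulr_gt0 //=.
apply: lt_le_trans (_ : (del / (1 + t)) * t <= del).
  by rewrite ltr_pM2r.
rewrite mulrAC ler_pdivrMr //; nra.
Qed.

Lemma vscaleK (t : R) (s : vec) : 0 < t -> vscale t^-1 (vscale t s) = s.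
Proof. by move=> t0; apply: funext => i; rewrite /vscale mulrA mulVf ?gt_eqF // mul1r. Qed.

Lemma hd_hom t s : zc s -> 0 < t -> hd h (vscale t s) = t * hd h s.
Proof.
move=> zs t0; apply/eqP; rewrite eq_le hd_scale_le //=.
have ti : 0 < t^-1 by rewrite invr_gt0.
have := hd_scale_le (zc_scale t zs) ti; rewrite vscaleK // => H.
by move: H; rewrite ler_pdivlMl.
Qed.

Lemma hd_add s1 s2 : zc s1 -> zc s2 -> hd h (vadd s1 s2) <= hd h s1 + hd h s2.
Proof.
move=> z1 z2; have z12 := zc_add z1 z2.
rewrite -lerBlDr; apply: (hd_ge L0 hL z1) => d1 d1p.
rewrite lerBlDr addrC -lerBlDr; apply: (hd_ge L0 hL z2) => d2 d2p.
rewrite lerBlDr.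
pose M := 2 * (1 + vnorm s1).
have M0 : 0 < M by rewrite mulr_gt0 // ltr_pwDl // vnorm_ge0.
have M1 : 1 <= M.
  rewrite /M; have := vnorm_ge0 s1; lra.
pose del := Num.min d1 (d2 / M).
have delp : 0 < del by rewrite lt_min d1p divr_gt0.
have del1 : del <= d1 by rewrite ge_min lexx.
have del2 : del <= d2 / M by rewrite ge_min lexx orbT.
have del2' : del <= d2.
  apply: le_trans del2 _; rewrite ler_pdivrMr //; nra.
apply: le_trans (hd_le L0 hL z12 delp) _.
apply: (Qs_le L0 hL z12 delp) => -[y t] [ay [zy /andP[t0 td]]] /=.
have -> : quot h (vadd s1 s2) (y, t) =
    quot h s2 (vadd y (vscale t s1), t) + quot h s1 (y, t).
  rewrite /quot /=.
  have -> : vadd y (vscale t (vadd s1 s2)) = vadd (vadd y (vscale t s1)) (vscale t s2).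
    by apply: funext => i; rewrite /vadd /vscale mulrDr addrA.
  by rewrite -mulrDl addrA subrK.
apply: lerD; last first.
  apply: (Qs_ub L0 hL z1).
  split; first exact: lt_le_trans ay del1.
  by split => //; rewrite t0 (lt_le_trans td del1).
apply: (Qs_ub L0 hL z2).
split => /=.
  have -> : vsub (vadd y (vscale t s1)) x = (fun i => vsub y x i + vscale t s1 i).
    by apply: funext => i; rewrite /vsub /vadd addrAC.
  apply: le_lt_trans (vnorm_add _ _) _.
  rewrite vnorm_scale ?ltW //.
  apply: lt_le_trans (_ : M * del <= d2); last by rewrite -ler_pdivlMl // mulrC.
  rewrite /M -mulrA ltr_pM2l // mulrDl mul1r ltr_leD //.
  by rewrite [vnorm s1 * _]mulrC ler_wpM2r ?vnorm_ge0 // ltW.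
split.
  by move=> i ni; rewrite /vadd /vscale z1 // mulr0 addr0; exact: (zy i ni).
by rewrite t0 (lt_le_trans td del2').
Qed.
End Sublin.
End Clarke.

Section MaxL.
Variable (R : realType).

Lemma maxdiff (a b : R) : Num.max 0 a - Num.max 0 b <= Num.max 0 (a - b).
Proof.
rewrite !maxEle; case: (lerP 0 a) => ha; case: (lerP 0 b) => hb;
  case: (lerP 0 (a - b)) => hab; lra.
Qed.

Lemma max0_neg (a : R) : a < 0 -> Num.max 0 a = 0.
Proof. by move=> a0; rewrite maxEle leNgt a0. Qed.

Lemma max_div (a t : R) : 0 < t -> Num.max 0 (a / t) * t = Num.max 0 a.
Proof.
move=> t0; rewrite !maxEle; case: lerP => h1; case: lerP => h2.
- by rewrite divfK ?gt_eqF.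
- by move: h1; rewrite pmulr_lge0 ?invr_gt0 // => /(lt_le_trans h2); rewrite ltxx.
- by move: h1; rewrite pmulr_llt0 ?invr_gt0 // => /(le_lt_trans h2); rewrite ltxx.
- by rewrite mul0r.
Qed.

Lemma max_mono (a b : R) : a <= b -> Num.max 0 a <= Num.max 0 b.
Proof. by move=> ab; rewrite !maxEle; case: (lerP 0 a) => h1; case: (lerP 0 b) => h2 //; lra. Qed.

Lemma max_addr (a e : R) : 0 <= e -> Num.max 0 (a + e) <= Num.max 0 a + e.
Proof. by move=> e0; rewrite !maxEle; case: (lerP 0 (a + e)) => h1; case: (lerP 0 a) => h2 //; lra. Qed.

Lemma maxdist (a b : R) : `|Num.max 0 a - Num.max 0 b| <= `|a - b|.
Proof.
rewrite !maxEle; case: (lerP 0 a) => ha; case: (lerP 0 b) => hb.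
- by [].
- rewrite subr0 !ger0_norm //; lra.
- rewrite sub0r normrN [`|a - b|]ler0_norm ?ger0_norm //; lra.
- rewrite subrr normr0 //.
Qed.
End MaxL.

Section Pen.
Variables (R : realType) (n m : nat) (Ic : {set 'I_n}) (x : 'I_n -> R).
Local Notation vec := ('I_n -> R).
Variables (f : vec -> R) (g : 'I_m -> vec -> R) (L eps : R).
Hypotheses (L0 : 0 <= L) (hf : lipschitz_c Ic L f)
  (hg : forall i, lipschitz_c Ic L (g i)) (eps0 : 0 < eps)
  (feas : feasible g x).

Lemma P_lip : lipschitz_c Ic (L + eps^-1 * (m%:R * L)) (penalty f g eps).
Proof.
move=> a b hab; rewrite /penalty /viol.
have -> : f a + eps^-1 * \sum_i Num.max 0 (g i a) - (f b + eps^-1 * \sum_i Num.max 0 (g i b))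
   = (f a - f b) + eps^-1 * \sum_i (Num.max 0 (g i a) - Num.max 0 (g i b)).
  by rewrite sumrB; ring.
apply: le_trans (ler_normD _ _) _; rewrite mulrDl; apply: lerD; first exact: hf.
rewrite normrM gtr0_norm ?invr_gt0 // -mulrA; apply: ler_wpM2l; first by rewrite invr_ge0 ltW.
apply: le_trans (ler_norm_sum _ _ _) _.
have -> : m%:R * L * vnorm (vsub a b) = \sum_(i < m) (L * vnorm (vsub a b)).
  rewrite sumr_const card_ord;
by rewrite -mulrA mulr_natl.
apply: ler_sum => i _.
apply: le_trans (maxdist _ _) _; exact: hg.
Qed.

Definition cc (i : 'I_m) : R := if g i x < 0 then 0 else eps^-1.

Lemma cc_ge0 i : 0 <= cc i.
Proof. by rewrite /cc; case: ifP => _ //; rewrite invr_ge0 ltW. Qed.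

Lemma quotP (s : vec) yt : quot (penalty f g eps) s yt =
  quot f s yt + eps^-1 * \sum_i quot (fun z => Num.max 0 (g i z)) s yt.
Proof.
rewrite /quot /penalty /viol -mulr_suml sumrB; ring.
Qed.

Lemma hd_pen (s : vec) : zc Ic s ->
  hd Ic x (penalty f g eps) s <=
    hd Ic x f s + \sum_i cc i * Num.max 0 (hd Ic x (g i) s).
Proof.
move=> zs.
have LP0 : 0 <= L + eps^-1 * (m%:R * L).
  by apply: addr_ge0 => //; apply: mulr_ge0; [rewrite invr_ge0 ltW|apply: mulr_ge0].
pose K := 1 + \sum_i cc i.
have K0 : 0 < K by rewrite ltr_pwDl // sumr_ge0 // => i _; exact: cc_ge0.
apply/ler_addgt0Pr => e e0.
pose e' := e / K.
have e'0 : 0 < e' by rewrite divr_gt0.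
have [df df0 Hdf] := hd_approx x L0 hf zs e'0.
have /choice [dg Hdg] : forall i, exists d, 0 < d /\ Qs Ic x (g i) s d < hd Ic x (g i) s + e'.
  by move=> i; have [d d0 Hd] := hd_approx x L0 (hg i) zs e'0; exists d.
pose D := 2 * L * (1 + vnorm s) + 1.
have D0 : 0 < D by rewrite ltr_pwDr // mulr_ge0 ?mulr_ge0 // addr_ge0 // vnorm_ge0.
pose thr i := if g i x < 0 then - g i x / D else 1.
have thr0 i : 0 < thr i.
  by rewrite /thr; case: ifP => // gi; rewrite divr_gt0 // oppr_gt0.
pose del := Num.min df (\big[Num.min/1]_i Num.min (dg i) (thr i)).
have delp : 0 < del.
  rewrite lt_min df0 /=; apply/bigmin_gtP; split => // i _.
  by rewrite lt_min thr0 andbT; case: (Hdg i).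
have deldf : del <= df by rewrite /del ge_min lexx.
have delbig i : del <= Num.min (dg i) (thr i).
  rewrite /del ge_min; apply/orP; right; exact: bigmin_le.
have deldg i : del <= dg i by move: (delbig i); rewrite le_min => /andP[].
have delthr i : del <= thr i by move: (delbig i); rewrite le_min => /andP[].
apply: le_trans (hd_le x LP0 (P_lip) zs delp) _.
apply: (Qs_le LP0 P_lip zs delp) => -[y t] a.
have [ay [zy /andP[t0 td]]] := a.
rewrite quotP.
have Hf : quot f s (y, t) <= hd Ic x f s + e'.
  apply: le_trans (Qs_ub L0 hf zs a) _.
  apply: le_trans (Qs_mono x L0 hf zs delp deldf) _; exact: ltW.
have Hg : forall i, eps^-1 * quot (fun z => Num.max 0 (g i z)) s (y, t) <=
    cc i * (Num.max 0 (hd Ic x (g i) s) + e').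
  move=> i; rewrite /cc; case: ifP => gneg.
    have gw : forall w, (forall j, j \notin Ic -> w j = x j) ->
        vnorm (vsub w x) <= 2 * del * (1 + vnorm s) -> g i w < 0.
      move=> w zw hw.
      have := hg i (x:=w) (y:=x) zw; rewrite ler_norml => /andP[_ h1].
      have h2 : L * vnorm (vsub w x) <= L * (2 * del * (1 + vnorm s)) by apply: ler_wpM2l.
      have h3 : del * D <= - g i x.
        by rewrite -ler_pdivlMr //; move: (delthr i); rewrite /thr gneg.
      have := vnorm_ge0 s; rewrite /D in h3; nra.
    have g1 : g i y < 0.
      apply: gw; first exact: zy.
      apply: le_trans (ltW ay) _; have := vnorm_ge0 s; nra.
    have g2 : g i (vadd y (vscale t s)) < 0.
      apply: gw.
        by move=> j nj; rewrite /vadd /vscale zs // mulr0 addr0; exact: zy.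
      have -> : vsub (vadd y (vscale t s)) x = (fun j => vsub y x j + vscale t s j).
        by apply: funext => j; rewrite /vsub /vadd addrAC.
      apply: le_trans (vnorm_add _ _) _; rewrite (vnorm_scale _ (ltW t0)).
      have := vnorm_ge0 s; have := vnorm_ge0 (vsub y x); nra.
    by rewrite /quot /= (max0_neg g1) (max0_neg g2) subrr !mul0r mulr0.

  have Hq : quot (fun z => Num.max 0 (g i z)) s (y, t) <= Num.max 0 (quot (g i) s (y, t)).
    rewrite /quot /= ler_pdivrMr //.
    by rewrite max_div //; apply: maxdiff.
  apply: ler_wpM2l; first by rewrite invr_ge0 ltW.
  apply: le_trans Hq _; apply: le_trans (max_mono (Qs_ub L0 (hg i) zs a)) _.
  apply: le_trans (max_mono (Qs_mono x L0 (hg i) zs delp (deldg i))) _.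
  apply: le_trans (max_mono (ltW (proj2 (Hdg i)))) _.
  exact: max_addr (ltW e'0).
rewrite mulr_sumr.
have HS : \sum_i eps^-1 * quot (fun z => Num.max 0 (g i z)) s (y, t) <=
   \sum_i cc i * Num.max 0 (hd Ic x (g i) s) + e' * \sum_i cc i.
  rewrite mulr_sumr -big_split /=; apply: ler_sum => i _.
  by apply: le_trans (Hg i) _; rewrite mulrDr [e' * _]mulrC.
have eK : e' * K = e by rewrite /e' divfK ?gt_eqF.
rewrite /K in eK; lra.
Qed.
End Pen.

Section Main.
Variables (R : realType) (n m : nat) (Ic : {set 'I_n}) (l u : 'I_n -> R)
  (f : ('I_n -> R) -> R) (g : 'I_m -> ('I_n -> R) -> R) (L eps : R) (xb : 'I_n -> R).
Hypotheses (L0 : 0 <= L) (hf : lipschitz_c Ic L f)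
  (hg : forall i, lipschitz_c Ic L (g i)) (eps0 : 0 < eps) (feas : feasible g xb).
Local Notation vec := ('I_n -> R).

Lemma ccp i : 0 <= cc xb g eps i.
Proof. exact: (cc_ge0 L0 hf hg eps0 feas i). Qed.

Definition pi (s : vec) : vec := fun j => if j \in Ic then s j else 0.
Lemma zc_pi s : zc Ic (pi s).
Proof. by move=> j /negbTE nj; rewrite /pi nj. Qed.
Lemma pi_zc s : zc Ic s -> pi s = s.
Proof. by move=> zs; apply: funext => j; rewrite /pi; case: ifP => // /negbT /zs ->. Qed.
Lemma pi_add s1 s2 : pi (fun j => s1 j + s2 j) = vadd (pi s1) (pi s2).
Proof. by apply: funext => j; rewrite /pi /vadd; case: ifP; rewrite ?addr0. Qed.
Lemma pi_scale (t : R) s : pi (fun j => t * s j) = vscale t (pi s).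
Proof. by apply: funext => j; rewrite /pi /vscale; case: ifP; rewrite ?mulr0. Qed.
Lemma pi0 : pi (fun _ => 0) = (fun _ => 0).
Proof. by apply: funext => j; rewrite /pi; case: ifP. Qed.

Lemma zc0 : zc Ic (fun _ : 'I_n => (0:R)).
Proof. by []. Qed.

Lemma hd0 h : lipschitz_c Ic L h -> hd Ic xb h (fun _ => 0) = 0.
Proof.
move=> hL; have := hd_bounds xb L0 hL zc0; rewrite vnorm0 mulr0 oppr0.
by move=> H; apply/eqP; rewrite eq_le andbC.
Qed.

Lemma vdot_pi (c : vec) s : zc Ic s ->
  vdot s (fun j => if j \in Ic then c j else 0) = \sum_j c j * s j.
Proof.
move=> zs; apply: eq_bigr => j _; case: ifP => [_|/negbT /zs ->]; first by rewrite mulrC.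
by rewrite !mulr0.
Qed.

Definition T := ('I_n + ('I_m * 'I_n + 'I_m))%type.

Lemma sumT (F : T -> R) : \sum_a F a =
  \sum_j F (inl j) + \sum_i \sum_j F (inr (inl (i, j))) + \sum_i F (inr (inr i)).
Proof.
rewrite big_sumType /= big_sumType /= addrA; congr (_ + _ + _).
by rewrite pair_bigA; apply: eq_bigr => -[i j].
Qed.

Definition phi (s : vec) := hd Ic xb f (pi s).
Definition psi i (s : vec) := hd Ic xb (g i) (pi s).
Definition b0 (z : T -> R) : vec := fun j => z (inl j).
Definition bi (z : T -> R) i : vec := fun j => z (inr (inl (i, j))).
Definition tt (z : T -> R) i : R := z (inr (inr i)).
Definition pp (z : T -> R) :=
  phi (b0 z) + \sum_i cc xb g eps i * Num.max 0 (psi i (bi z i) + tt z i).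

Lemma max_sub (a b : R) : Num.max 0 (a + b) <= Num.max 0 a + Num.max 0 b.
Proof.
by rewrite !maxEle; case: (lerP 0 (a + b)) => h1; case: (lerP 0 a) => h2;
  case: (lerP 0 b) => h3; lra.
Qed.

Lemma max_scale (t a : R) : 0 < t -> Num.max 0 (t * a) = t * Num.max 0 a.
Proof.
move=> t0; rewrite !maxEle; case: (lerP 0 (t * a)) => h1; case: (lerP 0 a) => h2 //;
  rewrite ?mulr0 //.
- by move: h1; rewrite pmulr_rge0 // => /(lt_le_trans h2); rewrite ltxx.
- by move: h1; rewrite pmulr_rlt0 // => /(le_lt_trans h2); rewrite ltxx.
Qed.

Lemma sublin_pp : sublin pp.
Proof.
split.
- move=> v w; rewrite /pp addrACA; apply: lerD.
    by rewrite /phi /b0 pi_add; apply: (hd_add xb L0 hf (zc_pi _) (zc_pi _)).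
  rewrite -big_split /=; apply: ler_sum => i _; rewrite -mulrDr.
  apply: ler_wpM2l; first exact: ccp.
  apply: (le_trans _ (max_sub (psi i (bi v i) + tt v i) (psi i (bi w i) + tt w i))); apply: max_mono.
  by rewrite /psi /tt (pi_add (bi v i) (bi w i)) addrACA lerD2r; apply: (hd_add xb L0 (hg i) (zc_pi _) (zc_pi _)).
- move=> t v t0; rewrite /pp mulrDr; congr (_ + _).
    by rewrite /phi /b0 pi_scale (hd_hom _ L0 hf (zc_pi _) t0).
  rewrite mulr_sumr; apply: eq_bigr => i _.
  rewrite /psi /tt /= (pi_scale t (bi v i)) (hd_hom _ L0 (hg i) (zc_pi _) t0).
  by rewrite -mulrDr max_scale // mulrCA.
Qed.


Definition diag (k : vec) : T -> R := fun a =>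
  match a with inl j => k j | inr (inl p) => k p.2 | inr (inr _) => 0 end.
Definition Cset : set (T -> R) := [set z | exists k, Dc Ic l u xb k /\ z = diag k].

Lemma C0 : Cset (fun _ => 0).
Proof.
exists (fun _ => 0); split; first by split => //; split => // i _ _.
by apply: funext => -[|[[]|]].
Qed.

Lemma Cadd a b : Cset a -> Cset b -> Cset (fun i => a i + b i).
Proof.
move=> [k1 [[z1 [l1 u1]] ->]] [k2 [[z2 [l2 u2]] ->]].
exists (fun j => k1 j + k2 j); split.
  split; first by move=> i ni; rewrite z1 // z2 // addr0.
  split => i ii h; [rewrite addr_ge0 ?l1 ?l2 // | have := u1 i ii h; have := u2 i ii h; lra].
by apply: funext => -[|[[]|]] //= _; rewrite addr0.
Qed.

Lemma Cmul t a : 0 < t -> Cset a -> Cset (fun i => t * a i).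
Proof.
move=> t0 [k [[z [lk uk]] ->]].
exists (fun j => t * k j); split.
  split; first by move=> i ni; rewrite z // mulr0.
  split => i ii h; [rewrite mulr_ge0 ?lk ?ltW // | rewrite pmulr_rle0 ?uk //].
by apply: funext => -[|[[]|]] //= _; rewrite mulr0.
Qed.

Lemma pi_eta (k : vec) : zc Ic k -> pi (fun j => k j) = k.
Proof. exact: pi_zc. Qed.

Hypothesis stat : forall s, Dc Ic l u xb s ->
  (0%:E <= clarke_dd Ic (penalty f g eps) xb s)%E.

Lemma LP0 : 0 <= L + eps^-1 * (m%:R * L).
Proof. by apply: addr_ge0 => //; apply: mulr_ge0; [rewrite invr_ge0 ltW|apply: mulr_ge0]. Qed.

Lemma pp_diag k : Dc Ic l u xb k -> 0 <= pp (diag k).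
Proof.
move=> Dk; have zk : zc Ic k by case: Dk.
have := stat Dk; rewrite (clarke_eq xb LP0 (P_lip L0 hf hg eps0 feas) zk) lee_fin => H.
apply: le_trans H _; apply: le_trans (hd_pen L0 hf hg eps0 feas zk) _.
rewrite /pp /phi /b0 /= (pi_eta zk) lerD2l; apply: ler_sum => i _.
by rewrite /psi /bi /tt /= addr0 (pi_eta zk).
Qed.


Lemma sublin_psi i : sublin (psi i).
Proof.
split.
- by move=> v w; rewrite /psi pi_add; apply: (hd_add xb L0 (hg i) (zc_pi _) (zc_pi _)).
- by move=> t v t0; rewrite /psi pi_scale (hd_hom _ L0 (hg i) (zc_pi _) t0).
Qed.

Lemma subdiff_of h (v : vec) : lipschitz_c Ic L h ->
  (forall j, j \notin Ic -> v j = 0) -> (forall s, zc Ic s -> vdot s v <= hd Ic xb h s) ->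
  clarke_subdiff Ic h xb v.
Proof.
move=> hL zv H; split => // s zs.
by rewrite (clarke_eq xb L0 hL zs) lee_fin; apply: H.
Qed.

Lemma vdot_comb (a : vec) (w : 'I_m -> R) (b : 'I_m -> vec) (s : vec) :
  vdot (fun j => a j + \sum_i w i * b i j) s = vdot s a + \sum_i w i * vdot s (b i).
Proof.
rewrite /vdot; under eq_bigr do rewrite mulrDl.
rewrite big_split /=; congr (_ + _); first by apply: eq_bigr => j _; rewrite mulrC.
under eq_bigr do rewrite mulr_suml.
rewrite exchange_big /=; apply: eq_bigr => i _; rewrite mulr_sumr.
by apply: eq_bigr => j _; rewrite mulrCA mulrC.
Qed.

Lemma main_sec : exists lam : 'I_m -> R,
  (forall i, 0 <= lam i) /\ \sum_i lam i * g i xb = 0 /\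
  (forall s, Dc Ic l u xb s ->
     exists (xi0 : vec) (xis : 'I_m -> vec),
       clarke_subdiff Ic f xb xi0 /\
       (forall i, clarke_subdiff Ic (g i) xb (xis i)) /\
       0 <= vdot (fun j => xi0 j + \sum_i lam i * xis i j) s).
Proof.
have [q [sq hq]] := @cone_inf R T pp Cset (fun _ => 0) sublin_pp C0 Cadd Cmul
  (fun _ _ _ _ => esym (addr0 0)) (fun _ _ _ _ => esym (mulr0 _))
  (fun a Ca => match Ca with ex_intro k (conj Dk ek) =>
     eq_ind_r (fun z => 0 <= pp z) (pp_diag Dk) ek end).
have [c Hc] := HB sq.
have Lam v : \sum_a c a * v a <= pp v.
  apply: le_trans (Hc v) _; have := hq v _ C0; rewrite subr0.
  by have -> : (fun i => v i + 0) = v by apply: funext => i; rewrite addr0.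
have LamK k : Dc Ic l u xb k -> 0 <= \sum_a c a * diag k a.
  move=> Dk; have Ck : Cset (diag k) by exists k.
  have := le_trans (Hc (fun a => - diag k a)) (hq _ _ Ck).
  have -> : (fun i => - diag k i + diag k i) = (fun _ => 0).
    by apply: funext => i; rewrite addNr.
  rewrite (sublin0 sublin_pp) subr0.
  under eq_bigr do rewrite mulrN.
  by rewrite sumrN oppr_le0.
have bm0 (I : finType) (F : I -> R) : \sum_i F i * 0 = 0.
  by apply: big1 => i _; rewrite mulr0.
have bm00 (F : 'I_m -> 'I_n -> R) : \sum_i \sum_j F i j * 0 = 0.
  by apply: big1 => i _; apply: big1 => j _; rewrite mulr0.
have HA s : zc Ic s -> \sum_j c (inl j) * s j <= hd Ic xb f s.
  move=> zs; pose v : T -> R := fun a => match a with inl j => s j | _ => 0 end.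
  have := Lam v; rewrite sumT /v /= bm0 bm00 !addr0.
  move/le_trans; apply.
  rewrite /pp /phi /b0 /= (pi_eta zs) big1 ?addr0 // => i _.
  by rewrite /psi /bi /tt /= pi0 (hd0 (hg i)) addr0 maxxx mulr0.
have HB' i0 tau : c (inr (inr i0)) * tau <= cc xb g eps i0 * Num.max 0 tau.
  pose v : T -> R := fun a => match a with inr (inr i) => if i == i0 then tau else 0 | _ => 0 end.
  have := Lam v; rewrite sumT /v /= bm0 bm00 !add0r.
  rewrite (bigD1 i0) //= eqxx big1 ?addr0; last first.
    by move=> i /negbTE ->; rewrite mulr0.
  move/le_trans; apply.
  rewrite /pp /phi /b0 /= pi0 (hd0 hf) add0r (bigD1 i0) //= big1 ?addr0.
    by rewrite /psi /bi /tt /= eqxx pi0 (hd0 (hg i0)) add0r.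
  by move=> i /negbTE ni; rewrite /psi /bi /tt /= ni pi0 (hd0 (hg i)) addr0 maxxx mulr0.
have HC i0 s : zc Ic s ->
    \sum_j c (inr (inl (i0, j))) * s j <= c (inr (inr i0)) * hd Ic xb (g i0) s.
  move=> zs.
  pose v : T -> R := fun a => match a with inl _ => 0
    | inr (inl p) => if p.1 == i0 then s p.2 else 0
    | inr (inr i) => if i == i0 then - hd Ic xb (g i0) s else 0 end.
  have E0 : \sum_j c (inl j) * v (inl j) = 0 by rewrite /v bm0.
  have E1 : \sum_i \sum_j c (inr (inl (i, j))) * v (inr (inl (i, j))) =
      \sum_j c (inr (inl (i0, j))) * s j.
    rewrite (bigD1 i0) //= /v /= eqxx.
    rewrite [X in _ + X](_ : _ = 0) ?addr0 //.
    by apply: big1 => i /negbTE ni; apply: big1 => j _; rewrite ni mulr0.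
  have E2 : \sum_i c (inr (inr i)) * v (inr (inr i)) =
      c (inr (inr i0)) * - hd Ic xb (g i0) s.
    rewrite (bigD1 i0) //= /v /= eqxx.
    rewrite [X in _ + X](_ : _ = 0) ?addr0 //.
    by apply: big1 => i /negbTE ni; rewrite ni mulr0.
  have := Lam v; rewrite sumT E0 E1 E2 add0r.
  have -> : pp v = 0.
    rewrite /pp /phi /b0 /v /= pi0 (hd0 hf) add0r big1 // => i _.
    rewrite /psi /bi /tt /v /=; case: (eqVneq i i0) => [->|ni].
      have -> : pi (fun j => s j) = s by exact: pi_zc.
      by rewrite subrr maxxx mulr0.
    by rewrite pi0 (hd0 (hg i)) addr0 maxxx mulr0.
  by rewrite mulrN subr_le0.
have HD k : Dc Ic l u xb k ->
    0 <= \sum_j c (inl j) * k j + \sum_i \sum_j c (inr (inl (i, j))) * k j.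
  by move=> Dk; have := LamK k Dk; rewrite sumT /= bm0 addr0.
pose mu i := c (inr (inr i)).
have mu0 i : 0 <= mu i.
  by have := HB' i (-1); rewrite maxEle ler0N1 mulr0 mulrN1 oppr_le0.
pose eta i : vec := fun j => if j \in Ic then c (inr (inl (i, j))) else 0.
pose xi0 : vec := fun j => if j \in Ic then c (inl j) else 0.
have /choice [cs Hcs] : forall i, exists cv : 'I_n -> R,
    forall v, \sum_j cv j * v j <= psi i v.
  by move=> i; apply: HB; exact: sublin_psi.
pose xsub i : vec := fun j => if j \in Ic then cs i j else 0.
pose xis i : vec := if 0 < mu i then (fun j => eta i j / mu i) else xsub i.
exists mu; split => //; split.
  apply: big1 => i _.
  case: (ltrP (g i xb) 0) => gi.
    have := HB' i 1; rewrite /cc gi mul0r mulr1 => h.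
    have -> : mu i = 0 by apply/eqP; rewrite eq_le h mu0.
    by rewrite mul0r.
  have -> : g i xb = 0 by apply/eqP; rewrite eq_le gi feas.
  by rewrite mulr0.
have Hxi0 : clarke_subdiff Ic f xb xi0.
  apply: subdiff_of => //; first by move=> j /negbTE nj; rewrite /xi0 nj.
  by move=> s zs; rewrite vdot_pi //; apply: HA.
have Hxis i : clarke_subdiff Ic (g i) xb (xis i).
  rewrite /xis; case: ifP => mup.
    apply: subdiff_of => //; first by move=> j /negbTE nj; rewrite /eta nj mul0r.
    move=> s zs.
    have -> : vdot s (fun j => eta i j / mu i) = vdot s (eta i) / mu i.
      by rewrite /vdot mulr_suml; apply: eq_bigr => j _; rewrite mulrA.
    by rewrite ler_pdivrMr // mulrC vdot_pi //; apply: HC.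
  apply: subdiff_of => //; first by move=> j /negbTE nj; rewrite /xsub nj.
  move=> s zs; rewrite vdot_pi //; apply: le_trans (Hcs i s) _.
  by rewrite /psi (pi_zc zs).
move=> s Ds; have zs : zc Ic s by case: Ds.
exists xi0, xis; split => //; split => //.
rewrite vdot_comb.
have -> : \sum_i mu i * vdot s (xis i) = \sum_i \sum_j c (inr (inl (i, j))) * s j.
  apply: eq_bigr => i _; rewrite -(vdot_pi _ zs) /xis; case: ifP => mup.
    rewrite /vdot mulr_sumr; apply: eq_bigr => j _.
    have mun : mu i != 0 by rewrite gt_eqF.
    by rewrite /eta /=; field.
  have mz : mu i = 0.
    by apply/eqP; rewrite eq_le mu0 andbT leNgt mup.
  rewrite mz mul0r; apply/eqP; rewrite eq_le.
  have := HC i s zs; rewrite -/(mu i) mz mul0r -(vdot_pi _ zs) => ->.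
  have zs' : zc Ic (fun j => - s j) by move=> j /zs ->; rewrite oppr0.
  have := HC i _ zs'; rewrite -/(mu i) mz mul0r -(vdot_pi _ zs').
  rewrite andbT /vdot; under eq_bigr do rewrite mulNr.
  by rewrite sumrN oppr_le0.
by rewrite vdot_pi //; apply: HD.
Qed.

End Main.

End Helpers.
Import Helpers.

Theorem mainTheorem9 (R : realType) (n m : nat) (Ic : {set 'I_n})
  (l u : 'I_n -> R) (f : ('I_n -> R) -> R) (g : 'I_m -> ('I_n -> R) -> R) (L : R) :
  (forall i, l i < u i) ->
  (forall i, i \notin Ic -> l i \is a Num.int /\ u i \is a Num.int) ->
  lipschitz_c Ic L f -> (forall i, lipschitz_c Ic L (g i)) ->
  EMFCQ Ic l u g ->
  forall eps : R, 0 < eps ->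
  forall xbar : 'I_n -> R,
    clarke_stationary Ic l u (penalty f g eps) xbar ->
    feasible g xbar -> inZ Ic xbar -> inX l u xbar ->
    KKT_stationary Ic l u f g xbar.
Proof.
move=> hlu hint hf hg hemf eps eps0 xb [_ [_ [stat disc]]] feas zx xX.
pose L' := Num.max L 0.
have L0 : 0 <= L' by rewrite le_max lexx orbT.
have lipw h : lipschitz_c Ic L h -> lipschitz_c Ic L' h.
  move=> hh a b hab; apply: le_trans (hh a b hab) _.
  by apply: ler_wpM2r; [exact: vnorm_ge0|rewrite le_max lexx].
have [lam [l0 [lg Hc]]] := main_sec L0 (lipw f hf) (fun i => lipw _ (hg i)) eps0 feas stat.
have viol0 z : feasible g z -> viol g z = 0.
  move=> fz; apply: big1 => i _; rewrite maxEle; case: lerP => // h.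
  by apply/eqP; rewrite eq_le h fz.
split => //; split => //; split => //; exists lam; split => //; split => //; split => //.
move=> y By fy; have := disc y By.
by rewrite /penalty !viol0 // !mulr0 !addr0.
Qed.
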